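(* Let $X$ be a topological space, $\Lambda$ a real Hausdorff topological vector space, $Y$ a topological space and $y_0\in Y$. Let $\varphi\in\mathcal{G}$, $\Psi\in\mathcal{H}$ and $J\in\mathcal{M}$, and assume that $\varphi(\Psi(x,\cdot))$ is convex on $\Lambda$ for each $x\in X$. Let $\mu>\theta(\varphi,\Psi,J)$ and let $\mathcal{N}$ be a filtering cover of $X$ such that, for each $A\in\mathcal{N}$, the function $x\mapsto J(x)-\mu\varphi(\Psi(x,\lambda))$ is lower semicontinuous and inf-compact in $A$ for all $\lambda\in\mathrm{conv}(\{\lambda_x:x\in X\})$. Then there exist $A\in\mathcal{N}$ and $\lambda^*\in\mathrm{conv}(\{\lambda_x:x\in A\})$ such that the restriction to $A$ of the function $x\mapsto J(x)-\mu\varphi(\Psi(x,\lambda^* ))$ has at least two global minima.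
   Context: A family $\mathcal{N}$ of non-empty subsets of $X$ is a filtering cover of $X$ if $\bigcup_{A\in\mathcal{N}}A=X$ and for each $A_1,A_2\in\mathcal{N}$ there is $A_3\in\mathcal{N}$ with $A_1\cup A_2\subseteq A_3$. $\mathcal{G}$ is the family of all lower semicontinuous functions $\varphi:Y\to[0,+\infty[$ with $\varphi^{-1}(0)=\{y_0\}$ such that $\inf_{Y\setminus V}\varphi>0$ for each neighbourhood $V$ of $y_0$. $\mathcal{H}$ is the family of all functions $\Psi:X\times\Lambda\to Y$ such that, for each $x\in X$, $\Psi(x,\cdot)$ is continuous, injective, open, and takes the value $y_0$ at a point $\lambda_x$, and the function $x\mapsto\lambda_x$ is not constant. $\mathcal{M}$ is the family of all functions $J:X\to\mathbb{R}$ whose set $M_J$ of global minima is non-empty. For $\varphi\in\mathcal{G}$, $\Psi\in\mathcal{H}$, $J\in\mathcal{M}$, $$\theta(\varphi,\Psi,J)=\inf\left\{\frac{J(x)-J(u)}{\varphi(\Psi(x,\lambda_u))}:(u,x)\in M_J\times X,\ \lambda_x\neq\lambda_u\right\}.$$ A function on a topological space is inf-compact if all its sublevel sets $\{\psi\leq r\}$ are compact. *)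

(* Defs.v *)
From HB Require Import structures.
From mathcomp Require Import all_boot all_order all_algebra.
From mathcomp Require Import all_classical all_reals all_analysis.
Set Implicit Arguments. Unset Strict Implicit. Unset Printing Implicit Defensive.
Import Order.TTheory GRing.Theory Num.Theory.
Local Open Scope classical_set_scope.
Local Open Scope ring_scope.

Definition filtering_cover (X : Type) (N : set (set X)) : Prop :=
  [/\ (forall A, N A -> A !=set0),
      \bigcup_(A in N) A = setT &
      (forall A1 A2, N A1 -> N A2 -> exists2 A3, N A3 & A1 `|` A2 `<=` A3)].

Definition lsc_in (X : topologicalType) (R : realType) (A : set X)
    (f : X -> R) : Prop :=
  forall x, A x -> forall r, r < f x ->
    \forall y \near x, A y -> r < f y.

Definition inf_compact_in (X : topologicalType) (R : realType) (A : set X)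
    (f : X -> R) : Prop :=
  forall r : R, compact (A `&` [set x | f x <= r]).

Definition in_G (R : realType) (Y : topologicalType) (y0 : Y)
    (phi : Y -> R) : Prop :=
  [/\ lsc_in setT phi,
      (forall y, 0 <= phi y),
      (forall y, phi y = 0 <-> y = y0) &
      (forall V, nbhs y0 V ->
         exists2 d : R, 0 < d & forall y, ~ V y -> d <= phi y)].

(* The family H; lam x is the (unique) point lambda_x with Psi x lambda_x = y0. *)
Definition in_H (R : realType) (X : Type) (L : topologicalLmodType R)
    (Y : topologicalType) (y0 : Y) (Psi : X -> L -> Y) (lam : X -> L) : Prop :=
  [/\ (forall x, continuous (Psi x)),
      (forall x, injective (Psi x)),
      (forall x (U : set L), open U -> open (Psi x @` U)),
      (forall x, Psi x (lam x) = y0) &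
      (exists x1 x2, lam x1 <> lam x2)].

Definition argmins (R : realType) (X : Type) (J : X -> R) : set X :=
  [set u | forall x, J u <= J x].

Definition in_M (R : realType) (X : Type) (J : X -> R) : Prop :=
  argmins J !=set0.

Definition theta (R : realType) (X : Type) (L : topologicalLmodType R)
    (Y : topologicalType) (phi : Y -> R) (Psi : X -> L -> Y) (lam : X -> L)
    (J : X -> R) : R :=
  inf [set t : R | exists u x, [/\ argmins J u, lam x <> lam u &
                                   t = (J x - J u) / phi (Psi x (lam u))]].

Definition convex_fun (R : realType) (L : lmodType R) (f : L -> R) : Prop :=
  forall (a b : L) (t : R), 0 <= t <= 1 ->
    f ((1 - t) *: a + t *: b) <= (1 - t) * f a + t * f b.

Definition conv_hull (R : realType) (L : lmodType R) (S : set L) : set L :=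
  [set v | exists (n : nat) (w : 'I_n -> R) (p : 'I_n -> L),
     [/\ (forall i, 0 <= w i), \sum_(i < n) w i = 1, (forall i, S (p i)) &
         v = \sum_(i < n) w i *: p i]].

(* Main.v *)
Require Import Defs.
From HB Require Import structures.
From mathcomp Require Import all_boot all_order all_algebra.
From mathcomp Require Import all_classical all_reals all_analysis.
From Stdlib Require List.
From mathcomp Require Import ring lra.
Import Order.TTheory GRing.Theory Num.Theory.
Import numFieldTopology.Exports numFieldNormedType.Exports.
Local Open Scope classical_set_scope.
Local Open Scope ring_scope.

Lemma compact_directed (T : topologicalType) (I : Type) (D : set I)
  (E : I -> set T) (K : set T) :
  compact K -> D !=set0 ->
  (forall i j, D i -> D j -> exists2 k, D k & E k `<=` E i `&` E j) ->
  (forall i, D i -> E i !=set0) -> (forall i, D i -> E i `<=` K) ->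
  exists c, K c /\ forall i B, D i -> nbhs c B -> E i `&` B !=set0.
Proof.
move=> cK [i0 Di0] dir ne sub.
have FF : Filter (filter_from D E) by apply: filter_from_filter; [exists i0|].
have PF : ProperFilter (filter_from D E) by apply: filter_from_proper.
have [|c [Kc clc]] := cK _ PF; first by exists i0 => //; apply: sub.
exists c; split => // i B Di nB.
by apply: clc => //; exists i.
Qed.

Lemma lsc_min (T : topologicalType) (R : realType) (K : set T) (g : T -> R) :
  compact K -> K !=set0 -> lsc_in K g ->
  exists2 k, K k & forall y, K y -> g k <= g y.
Proof.
move=> cK [k0 Kk0] lsc; apply: contrapT => H.
have H' : forall k, K k -> exists2 y, K y & g y < g k.
  move=> k Kk; apply: contrapT => nk; apply: H; exists k => // y Ky.
  by rewrite leNgt; apply/negP => gyk; apply: nk; exists y.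
have dirK : forall i j, K i -> K j -> exists2 k, K k &
   [set y | K y /\ g y < g k] `<=` [set y | K y /\ g y < g i] `&` [set y | K y /\ g y < g j].
  move=> i j Ki Kj; case: (leP (g i) (g j)) => gij.
    exists i => // y [Ky gy]; split; split => //; exact: lt_le_trans gij.
  exists j => // y [Ky gy]; split; split => //; exact: lt_trans gij.
have neK : forall k, K k -> [set y | K y /\ g y < g k] !=set0.
  by move=> k Kk; have [y Ky gy] := H' k Kk; exists y.
have subK : forall k, K k -> [set y | K y /\ g y < g k] `<=` K by move=> k Kk y [].
have [c [Kc clc]] := @compact_directed T T K (fun k => [set y | K y /\ g y < g k]) K cK
  (ex_intro _ k0 Kk0) dirK neK subK.
have [y Ky gyc] := H' c Kc.
have nb := lsc c Kc (g y) gyc.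
have [z [[Kz gzy] /= Hz]] := clc y _ Ky nb.
by move: (Hz Kz); rewrite ltNge (ltW gzy).
Qed.
Definition simplex (R : realType) n : set 'rV[R]_n :=
  [set w | (forall i, 0 <= w ord0 i) /\ \sum_(i < n) w ord0 i = 1].

Lemma lin_cont (R : realType) (L : topologicalLmodType R) n (q : 'I_n -> L) :
  continuous (fun w : 'rV[R]_n => \sum_(i < n) w ord0 i *: q i).
Proof.
move=> w.
apply: (@cvg_big L 'I_n +%R 0 xpredT (@add_continuous L)) => [|i _]; first exact: nbhs_filter.
apply: (@continuous_comp 'rV[R]_n (R^o * L)%type L (fun w : 'rV[R]_n => ((w ord0 i : R^o), q i))
   (fun z : R^o * L => z.1 *: z.2)); last exact: scale_continuous.
apply: (@cvg_pair _ _ _ (nbhs w) (nbhs (w ord0 i : R^o)) (nbhs (q i)) _ _ _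
   (fun w : 'rV[R]_n => (w ord0 i : R^o)) (fun _ => q i)); last exact: cvg_cst.
exact: (@coord_continuous R 1 n ord0 i w).
Qed.

Lemma sum_cont (R : realType) n :
  continuous (fun w : 'rV[R]_n => \sum_(i < n) w ord0 i).
Proof.
move=> w.
apply: (@cvg_big R^o 'I_n +%R 0 xpredT (@add_continuous R^o)) => [|i _]; first exact: nbhs_filter.
exact: coord_continuous.
Qed.

Lemma simplex_compact (R : realType) n : compact (simplex R n).
Proof.
apply: (@subclosed_compact _ _ [set v : 'rV[R]_n | forall i, `[(0:R), 1]%classic (v ord0 i)]).
- have -> : simplex R n = \bigcap_(i in [set: 'I_n]) ((fun w : 'rV[R]_n => w ord0 i) @^-1` [set x | 0 <= x])
       `&` ((fun w : 'rV[R]_n => \sum_(i < n) w ord0 i) @^-1` [set 1]).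
    apply/seteqP; split => w /=.
      by move=> [H1 H2]; split => // i _; exact: H1.
    by move=> [H1 H2]; split => // i; exact: H1.
  apply: closedI.
    apply: closed_bigI => i _; apply: preimage_closed.
      by move=> x _; exact: coord_continuous.
    exact: closed_ge.
  apply: preimage_closed; first by move=> x _; exact: sum_cont.
  exact: closed_eq.
- exact: (@rV_compact R n (fun _ => `[(0:R), 1]%classic) (fun _ => @segment_compact R 0 1)).
- move=> w [H1 H2] i; rewrite /= in_itv /= H1 /=.
  rewrite -H2 (bigD1 i) //= lerDl; apply: sumr_ge0 => j _; exact: H1.
Qed.
Lemma conv_pt (R : realType) (L : lmodType R) (S : set L) p : S p -> conv_hull S p.
Proof.
move=> Sp; exists 1%N, (fun _ => 1), (fun _ => p); split => //.
- by rewrite big_ord1.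
- by rewrite big_ord1 scale1r.
Qed.

Lemma conv_mono (R : realType) (L : lmodType R) (S T : set L) :
  S `<=` T -> conv_hull S `<=` conv_hull T.
Proof.
move=> ST v [n [w [p [H1 H2 H3 H4]]]]; exists n, w, p; split => // i.
exact/ST/H3.
Qed.

Lemma inf_min (R : realType) (T : Type) (A : set T) (g : T -> R) k :
  A k -> (forall y, A y -> g k <= g y) -> inf [set g y | y in A] = g k.
Proof.
move=> Ak kmin; apply/le_anti/andP; split.
  apply: ge_inf; last by exists k.
  by exists (g k) => _ [y Ay <-]; exact: kmin.
by apply: lb_le_inf; [exists (g k); exists k|move=> _ [y Ay <-]; exact: kmin].
Qed.

Lemma nth_In' (T : Type) (d : T) (s : seq T) i :
  (i < size s)%N -> List.In (nth d s i) s.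
Proof.
elim: s i => [|a s IH] [|i] //= hi; first by left.
by right; apply: IH.
Qed.

Lemma In_nth' (T : Type) (d : T) (s : seq T) x :
  List.In x s -> exists2 k, (k < size s)%N & nth d s k = x.
Proof.
elim: s => [|a s IH] //= [->|/IH [k hk hx]]; first by exists 0%N.
by exists k.+1.
Qed.

Lemma arith_key (R : realType) (sd dl a b M0 C0 : R) : 0 < sd -> sd < 1 -> 0 < dl ->
  sd * (dl + `|M0 - C0| + 1) = dl -> M0 <= a -> C0 <= b ->
  (1 - sd) * a + sd * b <= M0 -> a <= M0 + dl /\ b <= M0.
Proof.
move=> s0 s1 d0 sdk ha hb h.
have hn : M0 - C0 <= `|M0 - C0| := ler_norm _.
move: sdk hn; set t := `|M0 - C0| => sdk hn.
have hb' : b <= M0 by nra.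
split => //; nra.
Qed.

Theorem theorem3p3 (R : realType) (X : topologicalType)
    (L : topologicalLmodType R) (Y : topologicalType) (y0 : Y)
    (phi : Y -> R) (Psi : X -> L -> Y) (lam : X -> L) (J : X -> R)
    (mu : R) (N : set (set X)) :
  hausdorff_space L ->
  in_G y0 phi ->
  in_H y0 Psi lam ->
  in_M J ->
  (forall x, convex_fun (fun l : L => phi (Psi x l))) ->
  theta phi Psi lam J < mu ->
  filtering_cover N ->
  (forall A, N A -> forall l, conv_hull (lam @` setT) l ->
     lsc_in A (fun x => J x - mu * phi (Psi x l)) /\
     inf_compact_in A (fun x => J x - mu * phi (Psi x l))) ->
  exists A, N A /\ exists2 l, conv_hull (lam @` A) l &
    exists x1 x2, [/\ x1 <> x2, A x1, A x2 &
      forall y, A y ->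
        (J x1 - mu * phi (Psi x1 l) <= J y - mu * phi (Psi y l)) /\
        (J x2 - mu * phi (Psi x2 l) <= J y - mu * phi (Psi y l))].
Proof.
move=> hL [phi_lsc phi_ge0 phi0 phiV] [Psic Psiinj Psiopen Psilam [x1 [x2 nlam]]]
  [u0 u0M] cvx thmu [Nne Ncov Ndir] Hyp.
pose f x l := J x - mu * phi (Psi x l).
have phiy0 : phi y0 = 0 by apply/phi0.
have fll : forall x, f x (lam x) = J x.
  by move=> x; rewrite /f Psilam phiy0 mulr0 subr0.
have phipos : forall x l, l <> lam x -> 0 < phi (Psi x l).
  move=> x l nl; rewrite lt_neqAle phi_ge0 andbT; apply/eqP => /esym /phi0 h.
  by apply: nl; apply: (Psiinj x); rewrite h Psilam.
pose S := [set t : R | exists u x, [/\ argmins J u, lam x <> lam u &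
                                   t = (J x - J u) / phi (Psi x (lam u))]].
have Sne : S !=set0.
  have [h|h] := pselect (lam x1 = lam u0).
    exists ((J x2 - J u0) / phi (Psi x2 (lam u0))), u0, x2; split => //.
    by rewrite -h => /esym.
  by exists ((J x1 - J u0) / phi (Psi x1 (lam u0))), u0, x1; split.
have S0 : lbound S 0.
  move=> _ [u [x [uM nl ->]]]; apply: divr_ge0; last exact: phi_ge0.
  by rewrite subr_ge0; apply: uM.
have th0 : 0 <= theta phi Psi lam J by exact: lb_le_inf.
have mu0 : 0 < mu by exact: le_lt_trans thmu.
have [_ [u [xb [uM nlb ->]]] tmu] := inf_lt Sne thmu.
have pb := phipos xb (lam u) (fun h => nlb (esym h)).
have key : J xb - J u < mu * phi (Psi xb (lam u)) by rewrite -ltr_pdivrMr.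
have [A1 NA1 A1u] : (\bigcup_(A in N) A) u by rewrite Ncov.
have [A2 NA2 A2x] : (\bigcup_(A in N) A) xb by rewrite Ncov.
have [A NA A12] := Ndir A1 A2 NA1 NA2.
have Au : A u by apply: A12; left.
have Axb : A xb by apply: A12; right.
have minex : forall l, conv_hull (lam @` setT) l ->
    exists2 k, A k & forall y, A y -> f k l <= f y l.
  move=> l hl; have [lscA icA] := Hyp A NA l hl.
  have ne : (A `&` [set x | f x l <= f u l]) !=set0.
    by exists u; rewrite /setI /mkset; split.
  have ls : lsc_in (A `&` [set x | f x l <= f u l]) (fun x => f x l).
    rewrite /lsc_in => x [Ax _] r rlt; have := lscA x Ax r rlt; apply: filterS.
    by move=> y H [Ay _]; exact: H Ay.
  have [k [Ak kl] kmin] := @lsc_min X R (A `&` [set x | f x l <= f u l]) (fun x => f x l)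
      (icA (f u l)) ne ls.
  exists k => // y Ay; have [hy|hy] := leP (f y l) (f u l).
    exact: kmin.
  exact: le_trans kl (ltW hy).
pose rr := ((J xb - J u) / mu + phi (Psi xb (lam u))) / 2.
have rr1 : (J xb - J u) / mu < rr.
  have : (J xb - J u) / mu < phi (Psi xb (lam u)) by rewrite ltr_pdivrMr // mulrC.
  rewrite /rr; lra.
have rr2 : rr < phi (Psi xb (lam u)).
  have : (J xb - J u) / mu < phi (Psi xb (lam u)) by rewrite ltr_pdivrMr // mulrC.
  rewrite /rr; lra.
have nU : nbhs (lam u) [set l | rr < phi (Psi xb l)].
  have h1 := phi_lsc (Psi xb (lam u)) I rr rr2.
  have h2 := Psic xb (lam u).
  have h3 : nbhs (Psi xb (lam u)) [set y | rr < phi y].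
    by apply: filterS h1 => y; apply.
  exact: h2 h3.
move: nU; rewrite nbhsE => -[U' [oU' U'u] U'sub].
have oV : open (Psi u @` U') by exact: Psiopen.
have nV : nbhs y0 (Psi u @` U').
  by apply: open_nbhs_nbhs; split => //; exists (lam u) => //.
have [d d0 dV] := phiV _ nV.
pose r := Num.max (J xb - mu * rr) (J u - mu * d).
have r_lt : r < J u.
  rewrite /r gt_max; apply/andP; split.
    have : J xb - J u < mu * rr by rewrite -ltr_pdivrMl // mulrC.
    lra.
  by rewrite ltrBlDr ltrDl mulr_gt0.
have rprop : forall l, f u l <= r \/ f xb l <= r.
  move=> l; have [Ul|Ul] := pselect (U' l).
    right; have := U'sub l Ul => /= hl.
    rewrite /f /r le_max; apply/orP; left.
    by rewrite lerD2l lerN2 ler_pM2l // ltW.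
  left; have nVl : ~ (Psi u @` U') (Psi u l).
    by move=> [l' Ul' /Psiinj e]; apply: Ul; rewrite -e.
  have := dV _ nVl => hd.
  rewrite /f /r le_max; apply/orP; right.
  by rewrite lerD2l lerN2 ler_pM2l.
have convp : forall x, conv_hull (lam @` setT) (lam x).
  by move=> x; apply: conv_pt; exists x.
have [s [sA sprop]] : exists s : seq X, (forall x, List.In x s -> A x) /\
    forall y, A y -> r < f y (lam u) \/ exists2 x, List.In x s & r < f y (lam x).
  apply: contrapT => H.
  pose E (s : seq X) := [set y | A y /\ f y (lam u) <= r /\ forall x, List.In x s -> f y (lam x) <= r].
  pose D : set (seq X) := fun s => forall x, List.In x s -> A x.
  have neE : forall s, D s -> E s !=set0.
    move=> s Ds; apply: contrapT => nE; apply: H; exists s; split => // y Ay.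
    have [h1|h1] := leP (f y (lam u)) r; last by left.
    right; apply: contrapT => nx; apply: nE; exists y; split => //; split => //.
    move=> x xs; rewrite leNgt; apply/negP => hx; apply: nx; by exists x.
  have dirE : forall i j, D i -> D j -> exists2 k, D k & E k `<=` E i `&` E j.
    move=> i j Di Dj; exists (i ++ j).
      by move=> x xij; case: (List.in_app_or _ _ _ xij) => [/Di|/Dj].
    move=> y [Ay [hu hs]]; split; split => //; split => // x xs; apply: hs;
      apply: List.in_or_app; [left|right] => //.
  have subE : forall s, D s -> E s `<=` A `&` [set y | f y (lam u) <= r].
    by move=> s _ y [Ay [hu _]]; split.
  have cK := (Hyp A NA (lam u) (convp u)).2 r.
  have D0 : D !=set0 by exists [::] => x [].
  have [c [[Ac cu] clc]] := @compact_directed X (seq X) D E _ cK D0 dirE neE subE.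
  have : f c (lam c) <= r.
    rewrite leNgt; apply/negP => hc.
    have nb := (Hyp A NA (lam c) (convp c)).1 c Ac r hc.
    have Dc : D [:: c] by move=> x [<-|[]].
    have [z [[Az [_ hz]] /= Hz]] := clc [:: c] _ Dc nb.
    have := hz c (or_introl erefl).
    by rewrite leNgt (Hz Az).
  rewrite fll => Jc; have := uM c; lra.
pose n := (size s).+1.
pose xs (i : 'I_n) := nth u (u :: s) i.
pose q (i : 'I_n) := lam (xs i).
have xsA : forall i, A (xs i).
  move=> i; rewrite /xs; case: i => [[|k] hk] //=.
  by apply: sA; apply: nth_In'.
have cover : forall y, A y -> exists i : 'I_n, r < f y (q i).
  move=> y Ay; case: (sprop y Ay) => [h|[x xs_ h]].
    by exists ord0.
  have [k hk hx] := @In_nth' X u s x xs_.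
  have hk' : (k.+1 < n)%N by [].
  by exists (Ordinal hk'); rewrite /q /xs /= hx.
pose lamw (w : 'rV[R]_n) := \sum_(i < n) w ord0 i *: q i.
have convw : forall w, simplex R n w -> conv_hull (lam @` A) (lamw w).
  move=> w [w0 w1]; exists n, (fun i => w ord0 i), q; split => // i.
  by exists (xs i).
have convw' : forall w, simplex R n w -> conv_hull (lam @` setT) (lamw w).
  by move=> w /convw; apply: conv_mono => _ [x _ <-]; exists x.
pose m (w : 'rV[R]_n) := inf [set f y (lamw w) | y in A].
have mE : forall w, simplex R n w -> forall k, A k ->
    (forall y, A y -> f k (lamw w) <= f y (lamw w)) -> m w = f k (lamw w).
  by move=> w _ k Ak kmin; rewrite /m (@inf_min R X A (fun y => f y (lamw w)) k).
pose e (j : 'I_n) : 'rV[R]_n := \row_k ((k == j)%:R).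
have esum : forall j, \sum_(i < n) e j ord0 i = 1.
  move=> j; rewrite (bigD1 j) //= mxE eqxx big1 ?addr0 // => k /negbTE hk.
  by rewrite mxE hk.
have elam : forall j, lamw (e j) = q j.
  move=> j; rewrite /lamw (bigD1 j) //= mxE eqxx scale1r big1 ?addr0 // => k /negbTE hk.
  by rewrite mxE hk scale0r.
have eS : forall j, simplex R n (e j).
  move=> j; split; last exact: esum.
  by move=> i; rewrite mxE ler0n.
have lscm : lsc_in (simplex R n) (fun w => - m w).
  move=> w Sw rr' hr.
  have [k Ak kmin] := minex _ (convw' w Sw).
  move: hr; rewrite (mE w Sw k Ak kmin) => hr.
  have hphi : (J k + rr') / mu < phi (Psi k (lamw w)).
    rewrite ltr_pdivrMr // mulrC; move: hr; rewrite /f; lra.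
  have h1 := phi_lsc (Psi k (lamw w)) I _ hphi.
  have h2 : {for w, continuous (fun w' => Psi k (lamw w'))}.
    apply: continuous_comp; first exact: lin_cont.
    exact: Psic.
  have h3 : nbhs (Psi k (lamw w)) [set y | (J k + rr') / mu < phi y].
    by apply: filterS h1 => y; apply.
  have hn : nbhs w [set w' | (J k + rr') / mu < phi (Psi k (lamw w'))] := h2 _ h3.
  move: hn; apply: filterS => w' /= hw' Sw'.
  have [k' Ak' k'min] := minex _ (convw' w' Sw').
  rewrite (mE w' Sw' k' Ak' k'min).
  have := k'min k Ak; move: hw'; rewrite ltr_pdivrMr // /f; lra.
have [ws Sws wsmax] := @lsc_min _ _ _ _ (simplex_compact R n) (ex_intro _ _ (eS ord0)) lscm.
pose lstar := lamw ws.
have [xst xstA xstmin] := minex _ (convw' ws Sws).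
pose ms := f xst lstar.
have mws : m ws = ms := mE ws Sws xst xstA xstmin.
have ms_r : ms <= r.
  case: (rprop lstar) => h.
    exact: le_trans (xstmin u Au) h.
  exact: le_trans (xstmin xb Axb) h.
have [i hi] := cover xst xstA.
have [kq kqA kqmin] := minex (q i) (convp (xs i)).
pose cq := f kq (q i).
pose D := [set dl : R | 0 < dl <= 1].
pose E (dl : R) := [set y | A y /\ f y lstar <= ms + dl /\ f y (q i) <= ms].
have cK := (Hyp A NA lstar (convw' ws Sws)).2 (ms + 1).
have D0 : D !=set0 by exists 1; rewrite /D /= ltr01 lexx.
have dirE : forall a b, D a -> D b -> exists2 k, D k & E k `<=` E a `&` E b.
  move=> a b Da Db; case: (leP a b) => hab.
    exists a => // y [Ay [h1 h2]]; split; split => //; split => //; lra.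
  exists b => // y [Ay [h1 h2]]; split; split => //; split => //; lra.
have subE : forall dl, D dl -> E dl `<=` A `&` [set y | f y lstar <= ms + 1].
  move=> dl /andP [dl0 dl1] y [Ay [h1 h2]]; split => //=; lra.
have neE : forall dl, D dl -> E dl !=set0.
  move=> dl /andP [dl0 dl1].
  pose sd := dl / (dl + `|ms - cq| + 1).
  have den0 : 0 < dl + `|ms - cq| + 1 by have := normr_ge0 (ms - cq); lra.
  have sdk : sd * (dl + `|ms - cq| + 1) = dl by rewrite /sd mulfVK // gt_eqF.
  have sd0 : 0 < sd by rewrite /sd divr_gt0.
  have sd1 : sd < 1 by rewrite /sd ltr_pdivrMr // mul1r; have := normr_ge0 (ms - cq); lra.
  clearbody sd.
  pose wd := (1 - sd) *: ws + sd *: e i.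
  have Swd : simplex R n wd.
    case: Sws => ws0 ws1; split.
      move=> j; rewrite !mxE; apply: addr_ge0; apply: mulr_ge0 => //; try lra.
    under eq_bigr do rewrite !mxE.
    rewrite big_split /= -!mulr_sumr ws1 (bigD1 i) //= eqxx big1 ?addr0; last by move=> k /negbTE ->.
    by rewrite !mulr1 subrK.
  have lamwd : lamw wd = (1 - sd) *: lstar + sd *: q i.
    rewrite /lamw /lstar -(elam i) /lamw.
    rewrite !scaler_sumr -big_split; apply: eq_bigr => j _.
    by rewrite /= /wd !mxE [LHS]scalerDl !scalerA.
  have [y yA ymin] := minex _ (convw' wd Swd).
  have mwd := mE wd Swd y yA ymin.
  have hmax := wsmax wd Swd.
  rewrite mws mwd lerN2 lamwd in hmax.
  have hc := cvx y lstar (q i) sd.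
  rewrite /= in hc.
  have := hc ltac:(apply/andP; split; lra) => {}hc.
  have ha := xstmin y yA.
  have hb := kqmin y yA.
  move: hmax ha hb; rewrite /f /ms /f /cq /f.
  set Pa := phi (Psi y lstar); set Pb := phi (Psi y (q i)).
  set P := phi (Psi y _) => hmax ha hb.
  have hmuP : mu * P <= mu * ((1 - sd) * Pa + sd * Pb) by rewrite ler_pM2l.
  have eq1 : (1 - sd) * (J y - mu * Pa) + sd * (J y - mu * Pb) =
             J y - mu * ((1 - sd) * Pa + sd * Pb) by ring.
  have key2 : (1 - sd) * (J y - mu * Pa) + sd * (J y - mu * Pb) <=
              J xst - mu * phi (Psi xst lstar).
    rewrite eq1; move: hmax hmuP.
    generalize (mu * P) (mu * ((1 - sd) * Pa + sd * Pb)) => t1 t2; lra.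
  have [k1 k2] := @arith_key _ _ _ _ _ _ _ sd0 sd1 dl0 sdk ha hb key2.
  by exists y; split => //; split.
have [c [[Ac _] clc]] := @compact_directed X R D E _ cK D0 dirE neE subE.
have hc1 : f c lstar <= ms.
  rewrite leNgt; apply/negP => hcc.
  pose dd := Num.min 1 ((f c lstar - ms) / 2).
  have Ddd : D dd.
    rewrite /D /dd /= ge_min lexx orTb andbT lt_min ltr01 /=.
    by rewrite divr_gt0 // subr_gt0.
  have hdd : ms + dd < f c lstar.
    have : dd <= (f c lstar - ms) / 2 by rewrite /dd ge_min lexx orbT.
    lra.
  have nb := (Hyp A NA lstar (convw' ws Sws)).1 c Ac _ hdd.
  have [z [[Az [hz _]] /= Hz]] := clc dd _ Ddd nb.
  by move: (Hz Az); rewrite ltNge hz.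
have hc2 : f c (q i) <= ms.
  rewrite leNgt; apply/negP => hcc.
  have nb := (Hyp A NA (q i) (convp (xs i))).1 c Ac _ hcc.
  have D1 : D 1 by rewrite /D /= ltr01 lexx.
  have [z [[Az [_ hz]] /= Hz]] := clc 1 _ D1 nb.
  by move: (Hz Az); rewrite ltNge hz.
exists A; split => //; exists lstar; first exact: convw.
exists xst, c; split => //.
- move=> ec; move: hi; rewrite ec => hi.
  have := le_trans hc2 ms_r; rewrite leNgt hi //.
- move=> y Ay; split; first exact: xstmin.
  exact: le_trans hc1 (xstmin y Ay).
Qed.
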